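(* Let $(G,H)$ be a rooted graph and let $J_{\max}\subsetneq H$ be a primal subgraph of $(G,H)$ that is maximal with respect to inclusion among primal subgraphs. Then $m(J_{\max},H)<m(G,H)$.
   Context: For a graph $F$, $v_F,e_F$ are its numbers of vertices and edges. A rooted graph $(G,H)$ consists of a graph $H$ and an induced subgraph $G\subseteq H$ (the roots), with $e_H>e_G$. For subgraphs $A\subsetneq J\subseteq H$, $d(A,J)=(e_J-e_A)/(v_J-v_A)$ and $m(A,H)=\max_{A\subsetneq J\subseteq H}d(A,J)$. A subgraph $J$ with $G\subsetneq J\subseteq H$ and $d(G,J)=m(G,H)$ is called primal for $(G,H)$. *)

(* Defs.v *)
From mathcomp Require Import all_boot all_order all_algebra.
Set Implicit Arguments. Unset Strict Implicit. Unset Printing Implicit Defensive.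
Import Order.TTheory GRing.Theory Num.Theory.
Local Open Scope ring_scope.

(* A (finite simple) graph on a vertex universe T : finType is a pair
   (V, E) with V a set of vertices and E a set of edges, each edge a
   2-element subset of V. *)
Definition graph (T : finType) := ({set T} * {set {set T}})%type.

Definition vtx (T : finType) (F : graph T) : {set T} := F.1.
Definition edg (T : finType) (F : graph T) : {set {set T}} := F.2.

Definition nv (T : finType) (F : graph T) : nat := #|vtx F|.
Definition ne (T : finType) (F : graph T) : nat := #|edg F|.

Definition is_graph (T : finType) (F : graph T) : bool :=
  [forall e in edg F, (e \subset vtx F) && (#|e| == 2)%N].

Definition subgraph (T : finType) (A B : graph T) : bool :=
  [&& is_graph A, is_graph B, vtx A \subset vtx B & edg A \subset edg B].

Definition psubgraph (T : finType) (A B : graph T) : bool :=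
  subgraph A B && (A != B).

Definition induced (T : finType) (G H : graph T) : bool :=
  subgraph G H && (edg G == [set e in edg H | e \subset vtx G]).

Definition rooted (T : finType) (G H : graph T) : bool :=
  induced G H && (ne G < ne H)%N.

Definition dens (T : finType) (A J : graph T) : rat :=
  ((ne J)%:R - (ne A)%:R) / ((nv J)%:R - (nv A)%:R).

(* The subgraphs J with A ⊊ J ⊆ H over which m(A,H) is maximised;
   only those with v_J > v_A, for which d(A,J) is defined. *)
Definition admissible (T : finType) (A H J : graph T) : bool :=
  [&& psubgraph A J, subgraph J H & (nv A < nv J)%N].

Definition mdens (T : finType) (A H : graph T) : rat :=
  \big[Num.max/0]_(J : graph T | admissible A H J) dens A J.

Definition primal (T : finType) (G H J : graph T) : bool :=
  [&& psubgraph G J, subgraph J H & dens G J == mdens G H].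

(* Main.v *)
Require Import Defs.
From mathcomp Require Import all_boot all_order all_algebra.
From mathcomp Require Import ring lra.
Import Order.TTheory GRing.Theory Num.Theory.
Set Implicit Arguments. Unset Strict Implicit.
Local Open Scope ring_scope.

Lemma mediant (m eG eJ eK vG vJ vK : rat) : vG < vJ -> vJ < vK ->
  (eJ - eG) / (vJ - vG) = m -> m <= (eK - eJ) / (vK - vJ) ->
  m <= (eK - eG) / (vK - vG).
Proof.
move=> h1 h2 hm hle.
have p1 : 0 < vJ - vG by rewrite subr_gt0.
have p2 : 0 < vK - vJ by rewrite subr_gt0.
have p3 : 0 < vK - vG by rewrite subr_gt0 (lt_trans h1 h2).
rewrite ler_pdivlMr // in hle; rewrite ler_pdivlMr //.
have e : eJ - eG = m * (vJ - vG) by rewrite -hm divfK // gt_eqF.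
have -> : m * (vK - vG) = m * (vK - vJ) + m * (vJ - vG) by ring.
rewrite -e; lra.
Qed.

Lemma subgraph_trans (T : finType) (A B C : graph T) :
  subgraph A B -> subgraph B C -> subgraph A C.
Proof.
case/and4P=> gA gB vAB eAB /and4P[_ gC vBC eBC].
by rewrite /subgraph gA gC (subset_trans vAB vBC) (subset_trans eAB eBC).
Qed.

Lemma subgraph_refl (T : finType) (A B : graph T) : subgraph A B -> subgraph B B.
Proof. by case/and4P=> _ gB _ _; rewrite /subgraph gB !subxx. Qed.

Lemma subgraph_nv (T : finType) (A B : graph T) : subgraph A B -> (nv A <= nv B)%N.
Proof. by case/and4P=> _ _ s _; rewrite /nv subset_leq_card. Qed.

Lemma rooted_nv (T : finType) (G H : graph T) : rooted G H -> (nv G < nv H)%N.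
Proof.
case/andP=> /andP[sGH /eqP eG] lt.
case/and4P: sGH => _ gH vGH _.
rewrite /nv; apply: proper_card; rewrite properE vGH /=.
apply/negP=> vHG; move: lt; rewrite /ne eG.
suff -> : [set e in edg H | e \subset vtx G] = edg H by rewrite ltnn.
apply/setP=> e; rewrite inE; case eH: (e \in edg H) => //=.
move/forall_inP: gH => /(_ e eH) /andP[s _]; exact: subset_trans s vHG.
Qed.

Theorem lemma14 (T : finType) (G H Jmax : graph T) :
  rooted G H ->
  primal G H Jmax ->
  psubgraph Jmax H ->
  (forall J : graph T, primal G H J -> subgraph Jmax J -> J = Jmax) ->
  mdens Jmax H < mdens G H.
Proof.
move=> hr hp _ hmax.
have nGH := rooted_nv hr.
have sGH : subgraph G H by case/andP: hr => /andP[].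
have admH : admissible G H H.
  rewrite /admissible /psubgraph sGH nGH (subgraph_refl sGH) /= andbT.
  by apply/eqP=> e; move: nGH; rewrite e ltnn.
have mpos : 0 < mdens G H.
  apply: (lt_le_trans _ (@bigmax_sup _ _ _ 0 H (admissible G H) (dens G H) (dens G) admH (lexx _))).
  rewrite /dens.
  case/andP: hr => _ lt.
  by apply: divr_gt0; rewrite subr_gt0 ltr_nat.
case/and3P: hp => /andP[sGJ _] sJH /eqP dJ.
have nGJ : (nv G < nv Jmax)%N.
  rewrite ltn_neqAle subgraph_nv // andbT; apply/negP=> /eqP e.
  move: mpos; rewrite -dJ /dens e subrr invr0 mulr0 ltxx //.
apply: bigmax_lt => // K /and3P[/andP[sJK nJK] sKH nJKv].
rewrite ltNge; apply/negP=> hle.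
have sGK := subgraph_trans sGJ sJK.
have nGK := ltn_trans nGJ nJKv.
have admK : admissible G H K.
  rewrite /admissible /psubgraph sGK sKH nGK /= andbT.
  by apply/eqP=> e; move: nGK; rewrite e ltnn.
have le1 : dens G K <= mdens G H by apply: le_bigmax_cond.
have le2 : mdens G H <= dens G K.
  apply: (@mediant _ (ne G)%:R (ne Jmax)%:R (ne K)%:R (nv G)%:R (nv Jmax)%:R (nv K)%:R);
   by rewrite ?ltr_nat.
have pK : primal G H K.
  have nGK' : G != K by apply/eqP=> e; move: nGK; rewrite e ltnn.
  by rewrite /primal /psubgraph sGK sKH nGK' eq_le le1 le2.
by move: nJKv; rewrite (hmax K pK sJK) ltnn.
Qed.
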